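(* For $s\in\mu_r$, $u,v\in\mathcal{A}_1$, $w\in\mathcal{A}_r$: \[ (u\diamond_1v)\diamond_s w=u\diamond_s(v\diamond_s w). \]
   Context: Fix $r\ge1$, $\mu_r$ the $r$th roots of unity, $\mathcal{A}_r=\mathbb{Q}\langle x,y_s\mid s\in\mu_r\rangle$ the free noncommutative polynomial algebra over $\mathbb{Q}$, $\mathcal{A}_1=\mathbb{Q}\langle x,y\rangle$ with $y=y_1$. Write $z=x+y_1$, $z_s=x+y_s$, $\delta(1)=0$, $\delta(s)=1$ ($s\ne1$), $z_s^\delta=x+\delta(s)y_s$, $z_{k,s}=x^{k-1}y_s$. Let $\varphi$ be the algebra automorphism of $\mathcal{A}_r$ with $\varphi(x)=z$, $\varphi(y_s)=\delta(s)y_s-y_1$. Every word is uniquely $z_{k_1,s_1}\cdots z_{k_l,s_l}x^a$ ($l,a\ge0$); define linear maps $\mathcal{I}(z_{k_1,s_1}\cdots z_{k_l,s_l}x^a)=z_{k_1,s_1}z_{k_2,s_1s_2}\cdots z_{k_l,s_1\cdots s_l}x^a$ and $M_s(z_{k_1,s_1}\cdots z_{k_l,s_l}x^a)=z_{k_1,ss_1}z_{k_2,s_2}\cdots z_{k_l,s_l}x^a$ (with $M_s(x^a)=x^a$), and $\psi_s=\varphi\circ\mathcal{I}\circ M_s$. Diamond product: for $s\in\mu_r$, $\diamond_s:\mathcal{A}_1\times\mathcal{A}_r\to\mathcal{A}_r$ is the $\mathbb{Q}$-bilinear map defined recursively on words by $1\diamond_s w=w$, $v\diamond_s1=\psi_s\varphi(v)$,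 and for $v\in\mathcal{A}_1$, $w\in\mathcal{A}_r$, $1\ne t\in\mu_r$: $vx\diamond_s wx=(v\diamond_s wx)x-(vy\diamond_s w)x$; $vy\diamond_s wx=(v\diamond_s wx)y+(vy\diamond_s w)x$; $vx\diamond_s wy=(v\diamond_s wy)x+(vx\diamond_s w)y$; $vy\diamond_s wy=(v\diamond_s wy)y-(vx\diamond_s w)y$; $vx\diamond_s wy_t=(v\diamond_s wy_t)x+(v\diamond_s wz_t)y_t-(vy\diamond_s w)y_t$; $vy\diamond_s wy_t=(v\diamond_s wy_t)y-(v\diamond_s wz_t)y_t+(vy\diamond_s w)y_t$. (For $s=1$ and $v,w\in\mathcal{A}_1$, $v\diamond_1w\in\mathcal{A}_1$.) *)

(* Defs.v *)
From HB Require Import structures.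
From mathcomp Require Import all_boot all_order all_algebra all_field.
From mathcomp Require Import finmap monalg.
Set Implicit Arguments. Unset Strict Implicit. Unset Printing Implicit Defensive.
Import Order.TTheory GRing.Theory Num.Theory.
Local Open Scope ring_scope.

(* Letters: [None] is x, [Some s] is y_s (s a complex algebraic number;
   membership in mu_r is imposed by the predicate [inA] below). *)
Definition letter := option algC.
Definition word := seq letter.

(* The free noncommutative polynomial algebra Q<x, y_s>; its product is
   concatenation of words. *)
Definition A := {malg rat[{fmonom letter}]}.

Definition mon (w : word) : A := << FMonom w >>.
Definition X : A := mon [:: None].
Definition Yg (s : algC) : A := mon [:: Some s].

Definition mu (r : nat) (s : algC) : bool := s ^+ r == 1.

Definition inA (r : nat) (p : A) : Prop :=
  forall m : {fmonom letter}, m \in msupp p ->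
    all (fun l : letter => if l is Some t then mu r t else true) (fmonom_val m).

Definition lin (f : word -> A) (p : A) : A :=
  \sum_(m <- msupp p) p@_m *: f (fmonom_val m).

Definition delta (s : algC) : rat := if s == 1 then 0 else 1.

Definition phi_letter (l : letter) : A :=
  match l with
  | None => X + Yg 1
  | Some s => delta s *: Yg s - Yg 1
  end.
Definition phi_word (w : word) : A := \prod_(l <- w) phi_letter l.
Definition phi : A -> A := lin phi_word.

(* I : z_{k1,s1} ... z_{kl,sl} x^a |-> z_{k1,s1} z_{k2,s1 s2} ... x^a *)
Fixpoint Iw (acc : algC) (w : word) : word :=
  match w with
  | [::] => [::]
  | None :: w' => None :: Iw acc w'
  | Some t :: w' => Some (acc * t) :: Iw (acc * t) w'
  end.
Fixpoint Mw (s : algC) (w : word) : word :=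
  match w with
  | [::] => [::]
  | None :: w' => None :: Mw s w'
  | Some t :: w' => Some (s * t) :: w'
  end.

Definition Imap : A -> A := lin (fun w => mon (Iw 1 w)).
Definition Mmap (s : algC) : A -> A := lin (fun w => mon (Mw s w)).
Definition psi (s : algC) (p : A) : A := phi (Imap (Mmap s p)).

Definition splitlast (w : word) : option (word * letter) :=
  match rev w with
  | [::] => None
  | l :: r => Some (rev r, l)
  end.

(* diamond product on words, by recursion with fuel n = |v| + |w|
   (every recursive call has total length exactly n - 1).
   Left letters other than x, y = y_1 never occur for v in A_1 (value 0). *)
Fixpoint dia_aux (n : nat) (s : algC) (v w : word) : A :=
  match splitlast v, splitlast w with
  | None, _ => mon w
  | Some _, None => psi s (phi (mon v))
  | Some (v', a), Some (w', b) =>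
    match n with
    | 0 => 0
    | n'.+1 =>
      let D := dia_aux n' s in
      match a with
      | None =>
        match b with
        | None => D v' w * X - D (rcons v' (Some 1)) w' * X
        | Some t =>
          if t == 1 then D v' w * X + D v w' * Yg 1
          else D v' w * X + (D v' (rcons w' None) + D v' w) * Yg t
                 - D (rcons v' (Some 1)) w' * Yg t
        end
      | Some a' =>
        if a' == 1 then
          match b with
          | None => D v' w * Yg 1 + D v w' * X
          | Some t =>
            if t == 1 then D v' w * Yg 1 - D (rcons v' None) w' * Yg 1
            else D v' w * Yg 1 - (D v' (rcons w' None) + D v' w) * Yg t
                   + D v w' * Yg t
          end
        else 0
      end
    end
  end.

Definition dia_word (s : algC) (v w : word) : A :=
  dia_aux (size v + size w) s v w.

Definition dia (s : algC) (u w : A) : A :=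
  lin (fun v => lin (fun w' => dia_word s v w') w) u.

(* Main.v *)
Require Import Defs.
From HB Require Import structures.
From mathcomp Require Import all_boot all_order all_algebra all_field.
From mathcomp Require Import finmap monalg zify.
Set Implicit Arguments. Unset Strict Implicit. Unset Printing Implicit Defensive.
Import Order.TTheory GRing.Theory Num.Theory.
Local Open Scope fset_scope.
Local Open Scope ring_scope.

Lemma linEw (f : word -> A) (p : A) (d : {fset {fmonom letter}}) :
  msupp p `<=` d -> lin f p = \sum_(m <- d) p@_m *: f (fmonom_val m).
Proof.
move=> le; rewrite /lin (big_fset_incl _ le) //= => x _ /mcoeff_outdom ->.
by rewrite scale0r.
Qed.

Lemma linDZ (f : word -> A) (a : rat) (p q : A) :
  lin f (a *: p + q) = a *: lin f p + lin f q.
Proof.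
have h1 : msupp (a *: p + q) `<=` msupp p `|` msupp q.
  apply: fsubset_trans (msuppD_le _ _) _.
  by apply: fsetUSS (msuppZ_le _ _) (fsubset_refl _).
rewrite (linEw f h1) (linEw f (fsubsetUl _ (msupp q))).
rewrite (linEw f (fsubsetUr (msupp p) _)).
rewrite scaler_sumr -big_split /=; apply: eq_bigr => m _.
by rewrite mcoeffD mcoeffZ scalerDl scalerA.
Qed.

HB.instance Definition _ (f : word -> A) :=
  GRing.isLinear.Build rat A A *:%R (lin f) (linDZ f).

Lemma lin_mon (f : word -> A) w : lin f (mon w) = f w.
Proof.
by rewrite /mon (linEw f msuppU_le) big_seq_fset1 mcoeffUU scale1r.
Qed.

Lemma monUZ (c : rat) (k : {fmonom letter}) : << c *g k >> = c *: (<< k >> : A).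
Proof.
by apply/malgP => m; rewrite mcoeffZ !mcoeffU mulr_natr.
Qed.

Lemma lin_id (p : A) : lin mon p = p.
Proof.
rewrite [RHS]monalgE /lin; apply: eq_bigr => m _.
by rewrite /mon fmK [RHS]monUZ.
Qed.

Lemma lin_eq (f g : word -> A) p : f =1 g -> lin f p = lin g p.
Proof. by move=> e; apply: eq_bigr => m _; rewrite e. Qed.

Lemma lin_linear (L : {linear A -> A}) f p : L (lin f p) = lin (fun w => L (f w)) p.
Proof.
rewrite /lin raddf_sum; apply: eq_bigr => m _; exact: linearZ.
Qed.

Lemma lin_mulr f c p : lin f p * c = lin (fun w => f w * c) p.
Proof.
rewrite /lin mulr_suml; apply: eq_bigr => m _; by rewrite -scalerAl.
Qed.

Lemma lin_fD f g p : lin (fun w => f w + g w) p = lin f p + lin g p.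
Proof. by rewrite /lin -big_split; apply: eq_bigr => m _; rewrite scalerDr. Qed.

Lemma lin_fN f p : lin (fun w => - f w) p = - lin f p.
Proof. by rewrite /lin -sumrN; apply: eq_bigr => m _; rewrite scalerN. Qed.

Lemma lin_fZ (c : rat) f p : lin (fun w => c *: f w) p = c *: lin f p.
Proof. by rewrite /lin scaler_sumr; apply: eq_bigr => m _; rewrite !scalerA mulrC. Qed.

Lemma lin_f0 p : lin (fun _ => 0) p = 0.
Proof. by rewrite /lin big1 // => m _; rewrite scaler0. Qed.

Lemma monM a b : mon a * mon b = mon (a ++ b).
Proof.
rewrite /mon malgM_def fgmulUU mulr1; congr (<< _ *g _>>).
by apply/val_inj; rewrite /= fmM.
Qed.

Lemma lin_catr f w p : lin f (p * mon w) = lin (fun m => f (m ++ w)) p.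
Proof.
rewrite -{1}(lin_id p) lin_mulr lin_linear; apply: lin_eq => m /=.
by rewrite monM lin_mon.
Qed.

Lemma scalerAr' (a : rat) (c x : A) : c * (a *: x) = a *: (c * x).
Proof.
apply/malgP => k; rewrite mcoeffZ (mcoeffMlw _ (fsubset_refl _) (msuppZ_le a x)).
rewrite mcoeffMl mulr_sumr; apply: eq_bigr => k1 _.
rewrite mulr_sumr; apply: eq_bigr => k2 _.
by rewrite mcoeffZ mulrnAr mulrCA.
Qed.

Lemma lin_mull f c p : c * lin f p = lin (fun w => c * f w) p.
Proof.
rewrite /lin mulr_sumr; apply: eq_bigr => m _; by rewrite scalerAr'.
Qed.

Lemma mulE (p q : A) : p * q = lin (fun a => lin (fun b => mon (a ++ b)) q) p.
Proof.
rewrite -{1}(lin_id p) lin_mulr; apply: lin_eq => a.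
by rewrite -{1}(lin_id q) lin_mull; apply: lin_eq => b; rewrite monM.
Qed.

Lemma phi_mon w : phi (mon w) = phi_word w.
Proof. exact: lin_mon. Qed.

Lemma phiD p q : phi (p + q) = phi p + phi q.
Proof. by rewrite /phi raddfD. Qed.
Lemma phiN p : phi (- p) = - phi p.
Proof. by rewrite /phi raddfN. Qed.
Lemma phiB p q : phi (p - q) = phi p - phi q.
Proof. by rewrite /phi raddfB. Qed.
Lemma phiZ (c : rat) p : phi (c *: p) = c *: phi p.
Proof. by rewrite /phi linearZ. Qed.

Lemma phi_wordM a b : phi_word (a ++ b) = phi_word a * phi_word b.
Proof. by rewrite /phi_word big_cat. Qed.

Lemma phiM p q : phi (p * q) = phi p * phi q.
Proof.
rewrite mulE /phi lin_linear lin_mulr; apply: lin_eq => a /=.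
rewrite lin_linear lin_mull; apply: lin_eq => b /=.
by rewrite lin_mon phi_wordM.
Qed.

Lemma mon_rcons w l : mon (rcons w l) = mon w * mon [:: l].
Proof. by rewrite monM cats1. Qed.

Lemma mon_nil : mon [::] = 1.
Proof.
rewrite /mon (_ : FMonom [::] = (mone : {fmonom letter})) ?mpolyC1E //.
by apply/val_inj; rewrite /= fm1.
Qed.

Lemma phi1 : phi (mon [::]) = mon [::].
Proof. by rewrite phi_mon /phi_word big_nil mon_nil. Qed.

Lemma phi_letter_mon l : phi (mon [:: l]) = phi_letter l.
Proof. by rewrite phi_mon /phi_word big_seq1. Qed.

Lemma phi_rcons w l : phi (mon (rcons w l)) = phi (mon w) * phi_letter l.
Proof. by rewrite mon_rcons phiM phi_letter_mon. Qed.

Lemma delta1 : delta 1 = 0.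
Proof. by rewrite /delta eqxx. Qed.
Lemma deltaN1 t : t != 1 -> delta t = 1.
Proof. by rewrite /delta => /negbTE ->. Qed.

Lemma phiX : phi X = X + Yg 1.
Proof. exact: phi_letter_mon. Qed.
Lemma phiY t : phi (Yg t) = delta t *: Yg t - Yg 1.
Proof. exact: phi_letter_mon. Qed.

Lemma phi_phi_letter l : phi (phi_letter l) = mon [:: l].
Proof.
case: l => [t|] /=.
  rewrite phiB phiZ !phiY delta1 scale0r add0r opprK.
  have [->|nt] := eqVneq t 1; first by rewrite delta1 !scale0r add0r.
  by rewrite deltaN1 // !scale1r subrK.
by rewrite phiD phiX phiY delta1 scale0r add0r addrK.
Qed.

Lemma phiK p : phi (phi p) = p.
Proof.
rewrite -{2}(lin_id p) {2}/phi /phi !lin_linear; apply: lin_eq => w /=.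
rewrite -/phi -phi_mon.
elim/last_ind: w => [|w l IH]; first by rewrite !phi1.
by rewrite phi_rcons phiM IH phi_phi_letter mon_rcons.
Qed.

Definition Tw (s : algC) (w : word) : word :=
  map (fun l : letter => if l is Some _ then Some s else None) w.
Definition Tmap_def (s : algC) : A -> A := lin (fun w => mon (Tw s w)).
Fact Tmap_key : unit. Proof. exact: tt. Qed.
Definition Tmap := locked_with Tmap_key Tmap_def.
Lemma TmapE : Tmap = Tmap_def. Proof. exact: locked_withE. Qed.

Fixpoint st_rev (s : algC) (a : word) {struct a} : word -> A :=
  match a with
  | [::] => fun b => mon (rev b)
  | la :: a' =>
    fix stb (b : word) {struct b} : A :=
      match la with
      | None => st_rev s a' b * X
      | Some _ =>
        match b with
        | [::] => mon (Tw s (rev (la :: a')))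
        | None :: b' => stb b' * X
        | Some t :: b' => (st_rev s a' b + stb b' + st_rev s a' b' * X) * Yg t
        end
      end
  end.

Definition st s (a b : word) : A := st_rev s (rev a) (rev b).

Lemma st_nill s b : st s [::] b = mon b.
Proof. by rewrite /st /= revK. Qed.

Lemma Tw_rcons s a l : Tw s (rcons a l) = rcons (Tw s a) (if l is Some _ then Some s else None).
Proof. by rewrite /Tw map_rcons. Qed.

Lemma st_nilr s a : st s a [::] = mon (Tw s a).
Proof.
elim/last_ind: a => [|a l IH]; first by rewrite st_nill.
rewrite /st rev_rcons /=; case: l => [c|] /=; first by rewrite rev_cons revK.
by rewrite -/(st s a [::]) IH Tw_rcons mon_rcons.
Qed.

Lemma st_Xl s a b : st s (rcons a None) b = st s a b * X.
Proof. by rewrite /st rev_rcons; case: (rev b). Qed.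

Lemma st_YX s a c b : st s (rcons a (Some c)) (rcons b None) = st s (rcons a (Some c)) b * X.
Proof. by rewrite /st !rev_rcons. Qed.

Lemma st_YY s a c b t : st s (rcons a (Some c)) (rcons b (Some t)) =
  (st s a (rcons b (Some t)) + st s (rcons a (Some c)) b + st s a b * X) * Yg t.
Proof. by rewrite /st !rev_rcons. Qed.

Lemma st_Xr s a b : st s a (rcons b None) = st s a b * X.
Proof.
elim/last_ind: a b => [|a l IH] b; first by rewrite !st_nill mon_rcons.
case: l => [c|]; first exact: st_YX.
by rewrite !st_Xl IH.
Qed.

Definition star_def (s : algC) (p q : A) : A := lin (fun a => lin (fun b => st s a b) q) p.
Fact star_key : unit. Proof. exact: tt. Qed.
Definition star := locked_with star_key star_def.
Lemma starE : star = star_def. Proof. exact: locked_withE. Qed.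

Lemma star_mon s a b : star s (mon a) (mon b) = st s a b.
Proof. by rewrite starE /star_def !lin_mon. Qed.

Lemma starDl s p p' q : star s (p + p') q = star s p q + star s p' q.
Proof. by rewrite starE /star_def raddfD. Qed.
Lemma starNl s p q : star s (- p) q = - star s p q.
Proof. by rewrite starE /star_def raddfN. Qed.
Lemma starBl s p p' q : star s (p - p') q = star s p q - star s p' q.
Proof. by rewrite starE /star_def raddfB. Qed.
Lemma starZl s (c : rat) p q : star s (c *: p) q = c *: star s p q.
Proof. by rewrite starE /star_def linearZ. Qed.
Lemma starDr s p q q' : star s p (q + q') = star s p q + star s p q'.
Proof.
by rewrite starE /star_def -lin_fD; apply: lin_eq => a; rewrite raddfD.
Qed.
Lemma starNr s p q : star s p (- q) = - star s p q.
Proof.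
by rewrite starE /star_def -lin_fN; apply: lin_eq => a; rewrite raddfN.
Qed.
Lemma starBr s p q q' : star s p (q - q') = star s p q - star s p q'.
Proof. by rewrite starDr starNr. Qed.
Lemma starZr s (c : rat) p q : star s p (c *: q) = c *: star s p q.
Proof.
by rewrite starE /star_def -lin_fZ; apply: lin_eq => a; rewrite linearZ.
Qed.

Lemma star1l s q : star s (mon [::]) q = q.
Proof.
rewrite starE /star_def lin_mon -[RHS]lin_id; apply: lin_eq => b; exact: st_nill.
Qed.

Lemma star1r s p : star s p (mon [::]) = Tmap s p.
Proof. by rewrite starE TmapE /star_def /Tmap_def; apply: lin_eq => a; rewrite lin_mon st_nilr. Qed.

Lemma starXl s p q : star s (p * X) q = star s p q * X.
Proof.
rewrite starE /star_def /X lin_catr lin_mulr; apply: lin_eq => a.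
by rewrite cats1 lin_mulr; apply: lin_eq => b; rewrite st_Xl.
Qed.

Lemma starXr s p q : star s p (q * X) = star s p q * X.
Proof.
rewrite starE /star_def lin_mulr; apply: lin_eq => a.
by rewrite /X lin_catr lin_mulr; apply: lin_eq => b; rewrite cats1 st_Xr.
Qed.

Lemma starYY s p c q t : star s (p * Yg c) (q * Yg t) =
  (star s p (q * Yg t) + star s (p * Yg c) q + star s p q * X) * Yg t.
Proof.
rewrite starE /star_def /Yg !lin_catr !lin_mulr -!lin_fD lin_mulr; apply: lin_eq => a /=.
rewrite !lin_catr !lin_mulr -!lin_fD lin_mulr; apply: lin_eq => b /=.
by rewrite !cats1 st_YY.
Qed.

Lemma Tmap_mon s w : Tmap s (mon w) = mon (Tw s w).
Proof. by rewrite TmapE /Tmap_def lin_mon. Qed.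
Lemma TmapD s p q : Tmap s (p + q) = Tmap s p + Tmap s q.
Proof. by rewrite TmapE /Tmap_def raddfD. Qed.
Lemma TmapX s p : Tmap s (p * X) = Tmap s p * X.
Proof.
by rewrite TmapE /Tmap_def /X lin_catr lin_mulr; apply: lin_eq => w; rewrite /Tw map_cat monM.
Qed.
Lemma TmapY s p t : Tmap s (p * Yg t) = Tmap s p * Yg s.
Proof.
by rewrite TmapE /Tmap_def /Yg lin_catr lin_mulr; apply: lin_eq => w; rewrite /Tw map_cat monM.
Qed.

Lemma TwK s r w : Tw s (Tw r w) = Tw s w.
Proof. by rewrite /Tw -map_comp; apply: eq_map => -[]. Qed.

Lemma st_Tw s r a c : st s (Tw r a) c = st s a c.
Proof.
elim/last_ind: a c => [|a l IH] c; first by [].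
rewrite Tw_rcons; case: l => [x|]; last by rewrite !st_Xl IH.
elim/last_ind: c => [|c l' IHc]; first by rewrite !st_nilr Tw_rcons TwK Tw_rcons.
case: l' => [t|]; last by rewrite !st_YX IHc.
by rewrite !st_YY IHc !IH.
Qed.

Lemma Tmap_st s r a b : Tmap s (st r a b) = st s a (Tw s b).
Proof.
elim/last_ind: a b => [|a l IH] b; first by rewrite !st_nill Tmap_mon.
case: l => [x|]; last by rewrite !st_Xl TmapX IH.
elim/last_ind: b => [|b l' IHb]; first by rewrite !st_nilr Tmap_mon TwK.
rewrite Tw_rcons; case: l' => [t|]; last by rewrite !st_YX TmapX IHb.
by rewrite !st_YY TmapY !TmapD TmapX !IH IHb Tw_rcons.
Qed.

Lemma monYr w t : mon (rcons w (Some t)) = mon w * Yg t.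
Proof. exact: mon_rcons. Qed.
Lemma monXr w : mon (rcons w None) = mon w * X.
Proof. exact: mon_rcons. Qed.

Lemma star_YYw s a ca b t :
  star s (mon (rcons a (Some ca))) (mon (rcons b (Some t))) =
  (star s (mon a) (mon (rcons b (Some t))) + star s (mon (rcons a (Some ca))) (mon b)
   + star s (mon a) (mon b) * X) * Yg t.
Proof. by rewrite !star_mon st_YY. Qed.



Fact xr_key : unit. Proof. exact: tt. Qed.
Definition xr := locked_with xr_key (fun p : A => p * X).
Lemma xrE p : xr p = p * X. Proof. by rewrite /xr unlock. Qed.
Fact yr_key : unit. Proof. exact: tt. Qed.
Definition yr := locked_with yr_key (fun (t : algC) (p : A) => p * Yg t).
Lemma yrE t p : yr t p = p * Yg t. Proof. by rewrite /yr unlock. Qed.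
Fact mn_key : unit. Proof. exact: tt. Qed.
Definition mn := locked_with mn_key mon.
Lemma mnE w : mn w = mon w. Proof. by rewrite /mn unlock. Qed.
Fact tgl_key : unit. Proof. exact: tt. Qed.
Definition tgl := locked_with tgl_key (fun a : A => a).
Lemma tglE a : tgl a = a. Proof. by rewrite /tgl unlock. Qed.

Lemma tglC a y z : tgl a + (y + z) = y + (tgl a + z).
Proof. by rewrite tglE addrCA. Qed.
Lemma tglK1 a z : tgl a + (- a + z) = z.
Proof. by rewrite tglE addNKr. Qed.
Lemma tglK2 a z : tgl (- a) + (a + z) = z.
Proof. by rewrite tglE addKr. Qed.
Lemma tglK3 a : tgl a + - a = 0.
Proof. by rewrite tglE subrr. Qed.
Lemma tglK4 a : tgl (- a) + a = 0.
Proof. by rewrite tglE addNr. Qed.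

Ltac zstep :=
  match goal with
  | |- ?x + _ = 0 =>
      rewrite -{1}[x]tglE;
      repeat first [ rewrite tglK1 | rewrite tglK2 | rewrite tglK3 | rewrite tglK4 | rewrite tglC ];
      rewrite ?addr0;
      lazymatch goal with |- context [tgl _] => fail | _ => idtac end
  end.

Ltac zsolve :=
  apply/eqP; rewrite -subr_eq0; apply/eqP;
  rewrite ?opprD ?opprK -?addrA;
  repeat zstep; try reflexivity.

Lemma xrD p q : xr (p + q) = xr p + xr q. Proof. by rewrite !xrE mulrDl. Qed.
Lemma xrN p : xr (- p) = - xr p. Proof. by rewrite !xrE mulNr. Qed.
Lemma xrB p q : xr (p - q) = xr p - xr q. Proof. by rewrite xrD xrN. Qed.
Lemma xrZ (c : rat) p : xr (c *: p) = c *: xr p. Proof. by rewrite !xrE scalerAl. Qed.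
Lemma yrD t p q : yr t (p + q) = yr t p + yr t q. Proof. by rewrite !yrE mulrDl. Qed.
Lemma yrN t p : yr t (- p) = - yr t p. Proof. by rewrite !yrE mulNr. Qed.
Lemma yrB t p q : yr t (p - q) = yr t p - yr t q. Proof. by rewrite yrD yrN. Qed.
Lemma yrZ t (c : rat) p : yr t (c *: p) = c *: yr t p. Proof. by rewrite !yrE scalerAl. Qed.

Lemma mnX w : mn (rcons w None) = xr (mn w).
Proof. by rewrite mnE xrE mnE mon_rcons. Qed.
Lemma mnY w t : mn (rcons w (Some t)) = yr t (mn w).
Proof. by rewrite mnE yrE mnE mon_rcons. Qed.

Lemma sXl s p q : star s (xr p) q = xr (star s p q).
Proof. by rewrite !xrE starXl. Qed.
Lemma sXr s p q : star s p (xr q) = xr (star s p q).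
Proof. by rewrite !xrE starXr. Qed.
Lemma sYY s c p t q : star s (yr c p) (yr t q) =
  yr t (star s p (yr t q) + star s (yr c p) q + xr (star s p q)).
Proof. by rewrite !yrE xrE starYY. Qed.
Lemma s1l s q : star s (mn [::]) q = q.
Proof. by rewrite mnE star1l. Qed.
Lemma s1r s p : star s p (mn [::]) = Tmap s p.
Proof. by rewrite mnE star1r. Qed.
Lemma Tmn s w : Tmap s (mn w) = mn (Tw s w).
Proof. by rewrite !mnE Tmap_mon. Qed.
Lemma smn s a b : star s (mn a) (mn b) = st s a b.
Proof. by rewrite !mnE star_mon. Qed.
Lemma stX s a b : st s (rcons a None) b = xr (st s a b).
Proof. by rewrite xrE st_Xl. Qed.
Lemma TmapD' s p q : Tmap s (p + q) = Tmap s p + Tmap s q.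
Proof. exact: TmapD. Qed.
Lemma TmapXr s p : Tmap s (xr p) = xr (Tmap s p).
Proof. by rewrite !xrE TmapX. Qed.


Lemma splitlast_rcons v a : splitlast (rcons v a) = Some (v, a).
Proof. by rewrite /splitlast rev_rcons revK. Qed.

Lemma dw_nil s w : dia_word s [::] w = mon w.
Proof. by case: w. Qed.

Lemma dw_nilr s v a : dia_word s (rcons v a) [::] = psi s (phi (mon (rcons v a))).
Proof. by rewrite /dia_word addn0 size_rcons /= splitlast_rcons. Qed.

Lemma dw_rcons s v a w b : dia_word s (rcons v a) (rcons w b) =
  match a with
  | None => match b with
            | None => dia_word s v (rcons w b) * X - dia_word s (rcons v (Some 1)) w * X
            | Some t => if t == 1 then dia_word s v (rcons w b) * X + dia_word s (rcons v a) w * Yg 1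
                        else dia_word s v (rcons w b) * X
                          + (dia_word s v (rcons w None) + dia_word s v (rcons w b)) * Yg t
                          - dia_word s (rcons v (Some 1)) w * Yg t
            end
  | Some a' => if a' == 1 then match b with
            | None => dia_word s v (rcons w b) * Yg 1 + dia_word s (rcons v a) w * X
            | Some t => if t == 1 then dia_word s v (rcons w b) * Yg 1 - dia_word s (rcons v None) w * Yg 1
                        else dia_word s v (rcons w b) * Yg 1
                          - (dia_word s v (rcons w None) + dia_word s v (rcons w b)) * Yg t
                          + dia_word s (rcons v a) w * Yg t
            end else 0
  end.
Proof.
rewrite /dia_word !size_rcons !addSn !addnS /= !splitlast_rcons.
done.
Qed.

Definition ok1 (w : word) : bool := all (fun l : letter => if l is Some t then t == 1 else true) w.

Lemma phiXr p : phi (xr p) = xr (phi p) + yr 1 (phi p).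
Proof. by rewrite !xrE yrE phiM phiX mulrDr. Qed.
Lemma phiYr t p : phi (yr t p) = delta t *: yr t (phi p) - yr 1 (phi p).
Proof. by rewrite !yrE phiM phiY mulrBr -scalerAr'. Qed.
Lemma phiYr1 p : phi (yr 1 p) = - yr 1 (phi p).
Proof. by rewrite phiYr delta1 scale0r add0r. Qed.
Lemma phiYrt t p : t != 1 -> phi (yr t p) = yr t (phi p) - yr 1 (phi p).
Proof. by move=> nt; rewrite phiYr deltaN1 // scale1r. Qed.

Lemma dwXX s v w : dia_word s (rcons v None) (rcons w None) =
  xr (dia_word s v (rcons w None)) - xr (dia_word s (rcons v (Some 1)) w).
Proof. by rewrite dw_rcons !xrE. Qed.
Lemma dwXY1 s v w : dia_word s (rcons v None) (rcons w (Some 1)) =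
  xr (dia_word s v (rcons w (Some 1))) + yr 1 (dia_word s (rcons v None) w).
Proof. by rewrite dw_rcons eqxx xrE yrE. Qed.
Lemma dwXYt s v w t : t != 1 -> dia_word s (rcons v None) (rcons w (Some t)) =
  xr (dia_word s v (rcons w (Some t)))
  + yr t (dia_word s v (rcons w None) + dia_word s v (rcons w (Some t)))
  - yr t (dia_word s (rcons v (Some 1)) w).
Proof. by move=> nt; rewrite dw_rcons (negbTE nt) xrE !yrE. Qed.
Lemma dwYX s v w : dia_word s (rcons v (Some 1)) (rcons w None) =
  yr 1 (dia_word s v (rcons w None)) + xr (dia_word s (rcons v (Some 1)) w).
Proof. by rewrite dw_rcons eqxx xrE yrE. Qed.
Lemma dwYY1 s v w : dia_word s (rcons v (Some 1)) (rcons w (Some 1)) =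
  yr 1 (dia_word s v (rcons w (Some 1))) - yr 1 (dia_word s (rcons v None) w).
Proof. by rewrite dw_rcons eqxx !yrE. Qed.
Lemma dwYYt s v w t : t != 1 -> dia_word s (rcons v (Some 1)) (rcons w (Some t)) =
  yr 1 (dia_word s v (rcons w (Some t)))
  - yr t (dia_word s v (rcons w None) + dia_word s v (rcons w (Some t)))
  + yr t (dia_word s (rcons v (Some 1)) w).
Proof. by move=> nt; rewrite dw_rcons eqxx (negbTE nt) !yrE. Qed.

Lemma phimnX v : phi (mn (rcons v None)) = xr (phi (mn v)) + yr 1 (phi (mn v)).
Proof. by rewrite mnX phiXr. Qed.
Lemma phimnY1 v : phi (mn (rcons v (Some 1))) = - yr 1 (phi (mn v)).
Proof. by rewrite mnY phiYr1. Qed.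
Lemma phimnYt v t : t != 1 -> phi (mn (rcons v (Some t))) = yr t (phi (mn v)) - yr 1 (phi (mn v)).
Proof. by move=> nt; rewrite mnY phiYrt. Qed.


Definition good1 (p : A) : Prop := forall m : {fmonom letter}, ~~ ok1 m -> p@_m = 0.

Lemma good1_supp p m : good1 p -> m \in msupp p -> ok1 m.
Proof. by move=> gp; apply: contraTT => nm; rewrite -mcoeff_eq0 gp. Qed.

Lemma lin_eq_on f g p : good1 p -> (forall w, ok1 w -> f w = g w) -> lin f p = lin g p.
Proof.
move=> gp e; rewrite /lin; apply: eq_big_seq => m mp.
by rewrite e // (good1_supp gp mp).
Qed.

Lemma good1_lin f p : good1 p -> (forall w, ok1 w -> good1 (f w)) -> good1 (lin f p).
Proof.
move=> gp gf k nk; rewrite /lin raddf_sum /= big1_seq // => m /andP[_ mp].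
by rewrite mcoeffZ gf ?mulr0 // (good1_supp gp mp).
Qed.

Lemma good1_mon w : ok1 w -> good1 (mon w).
Proof.
move=> ow k nk; rewrite /mon mcoeffU; case: eqP => // e.
by move: nk; rewrite -e /= ow.
Qed.

Lemma good1D p q : good1 p -> good1 q -> good1 (p + q).
Proof. by move=> gp gq k nk; rewrite mcoeffD gp // gq // addr0. Qed.
Lemma good1N p : good1 p -> good1 (- p).
Proof. by move=> gp k nk; rewrite mcoeffN gp // oppr0. Qed.
Lemma good1Z (c : rat) p : good1 p -> good1 (c *: p).
Proof. by move=> gp k nk; rewrite mcoeffZ gp // mulr0. Qed.

Lemma ok1_cat a b : ok1 (a ++ b) = ok1 a && ok1 b.
Proof. by rewrite /ok1 all_cat. Qed.

Lemma good1M p q : good1 p -> good1 q -> good1 (p * q).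
Proof.
move=> gp gq k nk; rewrite mcoeffMl big1_seq // => k1 /andP[_ k1p].
rewrite big1_seq // => k2 /andP[_ k2q].
have [e|ne] := eqVneq (mmul k1 k2) k; last by rewrite mulr0n.
by move: nk; rewrite -e fmM ok1_cat (good1_supp gp k1p) (good1_supp gq k2q).
Qed.

Lemma good1_phi_mon w : ok1 w -> good1 (phi (mon w)).
Proof.
elim/last_ind: w => [|w l IH]; first by move=> _; rewrite phi1; apply: good1_mon.
rewrite /ok1 all_rcons => /andP[hl hw]; rewrite phi_rcons; apply: good1M; first exact: IH.
case: l hl => [t|] hl /=; last by apply: good1D; apply: good1_mon; rewrite /ok1 /= ?eqxx.
move/eqP: hl => ->.
by apply: good1D; [apply: good1Z|apply: good1N]; apply: good1_mon; rewrite /ok1 /= ?eqxx.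
Qed.

Lemma good1_phi p : good1 p -> good1 (phi p).
Proof. by move=> gp; apply: good1_lin => // w ow; rewrite -phi_mon; apply: good1_phi_mon. Qed.

Lemma IMT s w : ok1 w -> Iw 1 (Mw s w) = Tw s w.
Proof.
have IwT acc u : ok1 u -> Iw acc u = Tw acc u.
  elim: u acc => [|[t|] u IHu] acc //=; last by move=> h; rewrite IHu.
  by case/andP => /eqP -> h; rewrite mulr1 IHu.
elim: w => [|[t|] w IHw] //=; last by move=> h; rewrite IHw.
by case/andP => /eqP -> h; rewrite mulr1 mul1r IwT.
Qed.

Lemma IM_T s p : good1 p -> Imap (Mmap s p) = Tmap s p.
Proof.
move=> gp; rewrite /Imap /Mmap TmapE /Tmap_def lin_linear; apply: lin_eq_on => // w ow /=.
by rewrite lin_mon IMT.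
Qed.

Lemma base_r s v : ok1 v -> phi (psi s (phi (mon v))) = Tmap s (phi (mon v)).
Proof. by move=> ov; rewrite /psi phiK IM_T //; apply: good1_phi_mon. Qed.


Lemma ok1_rcons v a : ok1 (rcons v a) = ok1 v && (if a is Some t then t == 1 else true).
Proof. by rewrite /ok1 all_rcons andbC. Qed.


Ltac expand := rewrite ?(starDl, starDr, starNl, starNr, starBl, starBr, sXl, sXr, sYY);
  rewrite ?(xrD, yrD, xrN, yrN, xrB, yrB, opprK).

Lemma main_w s v w : ok1 v -> phi (dia_word s v w) = star s (phi (mn v)) (phi (mn w)).
Proof.
move: (leqnn (size v + size w)).
move: {2}(size v + size w)%N => n.
elim: n v w => [|n IHn] v w Hn Hv.
  by case: v Hn Hv => // _ _; rewrite dw_nil [mn [::]]mnE phi1 -[mon [::]]mnE s1l mnE.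
case/lastP: v Hn Hv => [|v a] Hn Hv; first by rewrite dw_nil [mn [::]]mnE phi1 -[mon [::]]mnE s1l mnE.
case/lastP: w Hn => [|w b] Hn.
  by rewrite dw_nilr [mn [::]]mnE phi1 -[mon [::]]mnE s1r base_r // mnE.
have IH : forall v w, (size v + size w <= n)%N -> ok1 v ->
  phi (dia_word s v w) = star s (phi (mn v)) (phi (mn w)).
  by move=> *; apply: IHn.
rewrite !size_rcons in Hn.
move: Hv; rewrite ok1_rcons => /andP[Hv Ha].
have Hv1 : ok1 (rcons v (Some 1)) by rewrite ok1_rcons Hv eqxx.
have Hv0 : ok1 (rcons v None) by rewrite ok1_rcons Hv.
case: a Ha => [a|] Ha; first move/eqP: Ha => ->.
- case: b Hn => [t|] Hn; last first.
    rewrite dwYX phiD phiYr1 phiXr !IH //; try (rewrite ?size_rcons; lia).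
    rewrite !phimnX !phimnY1; expand.
    move: (phi (mn v)) (phi (mn w)) => V W.
    zsolve.
  have [->|nt] := eqVneq t 1.
    rewrite dwYY1 phiB !phiYr1 !IH //; try (rewrite ?size_rcons; lia).
    rewrite !phimnX !phimnY1; expand.
    move: (phi (mn v)) (phi (mn w)) => V W.
    zsolve.
  rewrite dwYYt // phiD phiB phiYr1 !phiYrt // phiD !IH //; try (rewrite ?size_rcons; lia).
  rewrite !phimnX !phimnY1 !phimnYt //; expand.
  move: (phi (mn v)) (phi (mn w)) => V W.
  zsolve.
- case: b Hn => [t|] Hn; last first.
    rewrite dwXX phiB !phiXr !IH //; try (rewrite ?size_rcons; lia).
    rewrite !phimnX !phimnY1; expand.
    move: (phi (mn v)) (phi (mn w)) => V W.
    zsolve.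
  have [->|nt] := eqVneq t 1.
    rewrite dwXY1 phiD phiXr phiYr1 !IH //; try (rewrite ?size_rcons; lia).
    rewrite !phimnX !phimnY1; expand.
    move: (phi (mn v)) (phi (mn w)) => V W.
    zsolve.
  rewrite dwXYt // phiB phiD phiXr !phiYrt // phiD !IH //; try (rewrite ?size_rcons; lia).
  rewrite !phimnX !phimnY1 !phimnYt //; expand.
  move: (phi (mn v)) (phi (mn w)) => V W.
  zsolve.
Qed.


Lemma sYYw s a ca b t :
  star s (mn (rcons a (Some ca))) (mn (rcons b (Some t))) =
  yr t (star s (mn a) (mn (rcons b (Some t))) + star s (mn (rcons a (Some ca))) (mn b)
   + xr (star s (mn a) (mn b))).
Proof. by rewrite !smn st_YY yrE xrE. Qed.

Lemma sYYl s a ca q t : star s (mn (rcons a (Some ca))) (yr t q) =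
  yr t (star s (mn a) (yr t q) + star s (mn (rcons a (Some ca))) q + xr (star s (mn a) q)).
Proof. by rewrite mnY sYY. Qed.

Lemma sYYr s p cc c t : star s (yr cc p) (mn (rcons c (Some t))) =
  yr t (star s p (mn (rcons c (Some t))) + star s (yr cc p) (mn c) + xr (star s p (mn c))).
Proof. by rewrite mnY sYY. Qed.

Lemma assoc_w s r a b c :
  star s (star r (mn a) (mn b)) (mn c) = star s (mn a) (star s (mn b) (mn c)).
Proof.
move: (leqnn (size a + size b + size c)).
move: {2}(size a + size b + size c)%N => n.
elim: n a b c => [|n IHn] a b c Hn.
  by case: a Hn => // _; rewrite !s1l.
case/lastP: a Hn => [|a la] Hn; first by rewrite !s1l.
case/lastP: b Hn => [|b lb] Hn.
  by rewrite s1r Tmn s1l !smn st_Tw.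
case/lastP: c Hn => [|c lc] Hn.
  by rewrite !s1r smn Tmap_st Tmn smn.
have IH : forall a b c, (size a + size b + size c <= n)%N ->
  star s (star r (mn a) (mn b)) (mn c) = star s (mn a) (star s (mn b) (mn c)).
  by move=> *; apply: IHn.
rewrite !size_rcons in Hn.
case: la Hn => [ca|] Hn; last first.
  rewrite [mn (rcons a _)]mnX !sXl IH; [done | rewrite !size_rcons; lia].
case: lb Hn => [cb|] Hn; last first.
  rewrite [mn (rcons b _)]mnX sXr sXl IH;
    [by rewrite sXl sXr | rewrite !size_rcons; lia].
case: lc Hn => [t|] Hn; last first.
  rewrite [mn (rcons c _)]mnX !sXr IH; [done | rewrite !size_rcons; lia].
rewrite [star s (mn (rcons b _)) _]sYYw sYYl -sYYw !starDr !sXr.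
rewrite (sYYw r) sYYr -(sYYw r) !starDl !sXl.
rewrite !IH; try (rewrite ?size_rcons; lia).
rewrite !(yrD, xrD).
zsolve.
Qed.


Lemma lin_map (L : A -> A) f p :
  (forall (c : rat) x y, L (c *: x + y) = c *: L x + L y) ->
  L (lin f p) = lin (fun w => L (f w)) p.
Proof.
move=> HL.
have L0 : L 0 = 0.
  have h := HL 1 0 0; rewrite !scale1r addr0 in h.
  by apply: (addrI (L 0)); rewrite addr0 -h.
have Lsum : forall (sm : seq {fmonom letter}) (F : {fmonom letter} -> A),
    L (\sum_(m <- sm) F m) = \sum_(m <- sm) L (F m).
  move=> sm F; elim: sm => [|m sm IH]; first by rewrite !big_nil.
  by rewrite !big_cons -IH -{1}[F m]scale1r HL scale1r.
rewrite /lin Lsum; apply: eq_bigr => m _.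
by rewrite -[_ *: f _]addr0 HL L0 addr0.
Qed.

Lemma ok1_Tw1 w : ok1 (Tw 1 w).
Proof. by elim: w => [|[t|] w IH] //=; rewrite eqxx. Qed.

Lemma good1_st a b : ok1 a -> ok1 b -> good1 (st 1 a b).
Proof.
have gX : good1 X by apply: good1_mon.
elim/last_ind: a b => [|a l IH] b; first by move=> _ ob; rewrite st_nill; apply: good1_mon.
rewrite ok1_rcons => /andP[oa ol].
case: l ol => [c|] ol ob; last by rewrite st_Xl; apply: good1M => //; apply: IH.
elim/last_ind: b ob => [|b l' IHb] ob.
  by rewrite st_nilr; apply: good1_mon; apply: ok1_Tw1.
move: (ob); rewrite ok1_rcons => /andP[ob' ol'].
case: l' ol' ob => [t|] ol' ob; last by rewrite st_YX; apply: good1M => //; apply: IHb.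
move/eqP: ol' ob => -> ob; rewrite st_YY; apply: good1M; last by apply: good1_mon; rewrite /ok1 /= eqxx.
apply: good1D; first apply: good1D.
- exact: IH.
- exact: IHb.
- by apply: good1M => //; apply: IH.
Qed.

Lemma good1_star p q : good1 p -> good1 q -> good1 (star 1 p q).
Proof.
move=> gp gq; rewrite starE /star_def; apply: good1_lin => // a oa.
by apply: good1_lin => // b ob; apply: good1_st.
Qed.

Lemma inA1_good p : inA 1 p -> good1 p.
Proof.
move=> h k nk; apply: mcoeff_outdom; apply: contraNN nk => /h.
by rewrite /ok1; apply: sub_all => -[t|] //=; rewrite /mu expr1.
Qed.

Lemma lin_mn p : lin mn p = p.
Proof. rewrite -[RHS]lin_id; apply: lin_eq => w; exact: mnE. Qed.

Lemma dia_formula s p q : good1 p -> dia s p q = phi (star s (phi p) (phi q)).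
Proof.
move=> gp; rewrite /dia.
transitivity (lin (fun v => phi (star s (phi (mn v)) (phi q))) p).
  apply: (@lin_eq_on _ _ _ gp) => v ov.
  have E := @lin_map (fun x => phi (star s (phi (mn v)) (phi x))) mn q.
  have {E} E : phi (star s (phi (mn v)) (phi (lin mn q))) =
      lin (fun w => phi (star s (phi (mn v)) (phi (mn w)))) q.
    by apply: E => c x y; rewrite phiD phiZ starDr starZr phiD phiZ.
  rewrite lin_mn in E; rewrite E; apply: lin_eq => w.
  by move: (main_w s w ov) => <-; rewrite phiK.
have E := @lin_map (fun x => phi (star s (phi x) (phi q))) mn p.
have {E} E : phi (star s (phi (lin mn p)) (phi q)) =
    lin (fun w => phi (star s (phi (mn w)) (phi q))) p.
  by apply: E => c x y; rewrite phiD phiZ starDl starZl phiD phiZ.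
by rewrite lin_mn in E; rewrite E.
Qed.

Lemma assoc_p s r p q t : star s (star r p q) t = star s p (star s q t).
Proof.
have H1 : forall b c p, star s (star r p (mn b)) (mn c) = star s p (star s (mn b) (mn c)).
  move=> b c p'.
  have E1 : star s (star r (lin mn p') (mn b)) (mn c) =
      lin (fun w => star s (star r (mn w) (mn b)) (mn c)) p'.
    by apply: (@lin_map (fun x => star s (star r x (mn b)) (mn c))) => c0 x y;
      rewrite starDl starZl starDl starZl.
  have E2 : star s (lin mn p') (star s (mn b) (mn c)) =
      lin (fun w => star s (mn w) (star s (mn b) (mn c))) p'.
    by apply: (@lin_map (fun x => star s x (star s (mn b) (mn c)))) => c0 x y;
      rewrite starDl starZl.
  rewrite lin_mn in E1 E2; rewrite E1 E2; apply: lin_eq => a; exact: assoc_w.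
have H2 : forall c p q, star s (star r p q) (mn c) = star s p (star s q (mn c)).
  move=> c p' q'.
  have E1 : star s (star r p' (lin mn q')) (mn c) =
      lin (fun w => star s (star r p' (mn w)) (mn c)) q'.
    by apply: (@lin_map (fun x => star s (star r p' x) (mn c))) => c0 x y;
      rewrite starDr starZr starDl starZl.
  have E2 : star s p' (star s (lin mn q') (mn c)) =
      lin (fun w => star s p' (star s (mn w) (mn c))) q'.
    by apply: (@lin_map (fun x => star s p' (star s x (mn c)))) => c0 x y;
      rewrite starDl starZl starDr starZr.
  rewrite lin_mn in E1 E2; rewrite E1 E2; apply: lin_eq => b; exact: H1.
have E1 : star s (star r p q) (lin mn t) = lin (fun w => star s (star r p q) (mn w)) t.
  by apply: (@lin_map (fun x => star s (star r p q) x)) => c0 x y; rewrite starDr starZr.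
have E2 : star s p (star s q (lin mn t)) = lin (fun w => star s p (star s q (mn w))) t.
  by apply: (@lin_map (fun x => star s p (star s q x))) => c0 x y;
    rewrite starDr starZr starDr starZr.
rewrite lin_mn in E1 E2; rewrite E1 E2; apply: lin_eq => c; exact: H2.
Qed.

Theorem mainTheorem10 (r : nat) (hr : (0 < r)%N) (s : algC) (hs : mu r s)
  (u v w : A) (hu : inA 1 u) (hv : inA 1 v) (hw : inA r w) :
  dia s (dia 1 u v) w = dia s u (dia s v w).
Proof.
have gu := inA1_good hu; have gv := inA1_good hv.
have E1 := dia_formula 1 v gu.
have g1 : good1 (dia 1 u v).
  rewrite E1; apply: good1_phi; apply: good1_star; exact: good1_phi.
rewrite (dia_formula s w g1) (dia_formula s (dia s v w) gu) (dia_formula s w gv) E1.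
transitivity (phi (star s (star 1 (phi u) (phi v)) (phi w))).
  by congr (phi (star s _ _)); exact: phiK.
transitivity (phi (star s (phi u) (star s (phi v) (phi w)))).
  exact: (congr1 phi (assoc_p _ _ _ _ _)).
by congr (phi (star s _ _)); symmetry; exact: phiK.
Qed.
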